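(* Let $K>0$ and let $G$ be a $K$-$\mathrm{CSA}$ group. There exists a quantifier-free first-order formula $\psi_K(x,y)$ in the language of groups (depending only on $K$) such that for every element $g\in G$ of infinite order, $M(g)=\{h\in G \mid G\models\psi_K(h,g)\}$.
   Context: A group $G$ is $K$-$\mathrm{CSA}$ ($K>0$) if: (i) every finite subgroup of $G$ has order at most $K$; (ii) every element $g$ of infinite order is contained in a unique maximal virtually abelian subgroup of $G$, denoted $M(g)$, and $M(g)$ is $K$-virtually torsion-free abelian, i.e. has a torsion-free abelian subgroup of index less than $K$; (iii) $M(g)$ is equal to its own normalizer. *)

(* Defs.v *)
From Stdlib Require Import List Arith.
Import ListNotations.

Record group (T : Type) := Group {
  gmul : T -> T -> T;
  ginv : T -> T;
  gone : T;
  gmulA : forall x y z, gmul x (gmul y z) = gmul (gmul x y) z;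
  gmul1l : forall x, gmul gone x = x;
  gmulVl : forall x, gmul (ginv x) x = gone
}.
Arguments gmul {T} g _ _.
Arguments ginv {T} g _.
Arguments gone {T} g.

Section GroupDefs.
Context {T : Type} (G : group T).

Fixpoint gpow (x : T) (n : nat) : T :=
  match n with 0 => gone G | S n => gmul G x (gpow x n) end.

Definition subgroup (H : T -> Prop) : Prop :=
  H (gone G) /\ (forall x y, H x -> H y -> H (gmul G x y)) /\
  (forall x, H x -> H (ginv G x)).

Definition subset (H N : T -> Prop) : Prop := forall x, H x -> N x.
Definition same_set (H N : T -> Prop) : Prop := forall x, H x <-> N x.

Definition card_le (H : T -> Prop) (n : nat) : Prop :=
  exists l : list T, length l <= n /\ forall x, H x -> In x l.

Definition finite_set (H : T -> Prop) : Prop := exists n, card_le H n.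

Definition infinite_order (g : T) : Prop :=
  forall n, 0 < n -> gpow g n <> gone G.

Definition abelian (H : T -> Prop) : Prop :=
  forall x y, H x -> H y -> gmul G x y = gmul G y x.

Definition torsion_free (H : T -> Prop) : Prop :=
  forall x, H x -> x <> gone G -> infinite_order x.

(* A is a subgroup of H whose index in H is at most n: H is covered by at
   most n left cosets a A with a in H. *)
Definition index_le (H A : T -> Prop) (n : nat) : Prop :=
  exists l : list T, length l <= n /\ (forall a, In a l -> H a) /\
    forall h, H h -> exists a, In a l /\ A (gmul G (ginv G a) h).

Definition virtually_abelian (H : T -> Prop) : Prop :=
  subgroup H /\ exists A n, subgroup A /\ subset A H /\ abelian A /\ index_le H A n.

Definition K_virtually_tf_abelian (K : nat) (H : T -> Prop) : Prop :=
  exists A n, subgroup A /\ subset A H /\ abelian A /\ torsion_free A /\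
    n < K /\ index_le H A n.

Definition max_va_containing (g : T) (M : T -> Prop) : Prop :=
  virtually_abelian M /\ M g /\
  forall N, virtually_abelian N -> subset M N -> same_set N M.

Definition self_normalizing (M : T -> Prop) : Prop :=
  forall x, (forall m, M m <-> M (gmul G x (gmul G m (ginv G x)))) -> M x.

Definition K_CSA (K : nat) : Prop :=
  (forall H, subgroup H -> finite_set H -> card_le H K) /\
  (forall g, infinite_order g ->
     (exists M, max_va_containing g M) /\
     (forall M M', max_va_containing g M -> max_va_containing g M' -> same_set M M') /\
     (forall M, max_va_containing g M ->
        K_virtually_tf_abelian K M /\ self_normalizing M)).
End GroupDefs.

(* Quantifier-free first-order formulas in the language of groups
   (signature: *, ^-1, 1; equality) in the two free variables x, y. *)
Inductive gterm : Type :=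
  | TX | TY | TOne | TMul (s t : gterm) | TInv (t : gterm).

Inductive qf_formula : Type :=
  | FTrue | FFalse
  | FEq (s t : gterm)
  | FNot (f : qf_formula)
  | FAnd (f1 f2 : qf_formula)
  | FOr (f1 f2 : qf_formula)
  | FImp (f1 f2 : qf_formula).

Fixpoint eval_term {T} (G : group T) (x y : T) (t : gterm) : T :=
  match t with
  | TX => x | TY => y | TOne => gone G
  | TMul s u => gmul G (eval_term G x y s) (eval_term G x y u)
  | TInv s => ginv G (eval_term G x y s)
  end.

Fixpoint sat {T} (G : group T) (x y : T) (f : qf_formula) : Prop :=
  match f with
  | FTrue => True | FFalse => False
  | FEq s t => eval_term G x y s = eval_term G x y t
  | FNot f => ~ sat G x y f
  | FAnd f1 f2 => sat G x y f1 /\ sat G x y f2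
  | FOr f1 f2 => sat G x y f1 \/ sat G x y f2
  | FImp f1 f2 => sat G x y f1 -> sat G x y f2
  end.

(* Main.v *)
Require Import Defs.
From Stdlib Require Import List Arith Lia Classical.
Import ListNotations.

Lemma mulVr {T} (G : group T) x : gmul G x (ginv G x) = gone G.
Proof.
  rewrite <- (gmul1l _ G (gmul G x (ginv G x))).
  rewrite <- (gmulVl _ G (ginv G x)) at 1.
  rewrite <- gmulA.
  rewrite (gmulA _ G (ginv G x) x (ginv G x)).
  rewrite gmulVl, gmul1l. apply gmulVl.
Qed.

Lemma mul1r {T} (G : group T) x : gmul G x (gone G) = x.
Proof. rewrite <- (gmulVl _ G x), gmulA, mulVr, gmul1l. reflexivity. Qed.

Lemma mulKl {T} (G : group T) x z : gmul G (ginv G x) (gmul G x z) = z.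
Proof. rewrite gmulA, gmulVl, gmul1l. reflexivity. Qed.

Lemma mulKr {T} (G : group T) x z : gmul G x (gmul G (ginv G x) z) = z.
Proof. rewrite gmulA, mulVr, gmul1l. reflexivity. Qed.

Lemma inv_uniq {T} (G : group T) x y : gmul G x y = gone G -> y = ginv G x.
Proof. intro H. rewrite <- (mulKl G x y), H, mul1r. reflexivity. Qed.

Lemma invinv {T} (G : group T) x : ginv G (ginv G x) = x.
Proof. symmetry. apply inv_uniq. apply gmulVl. Qed.

Lemma invmul {T} (G : group T) x y :
  ginv G (gmul G x y) = gmul G (ginv G y) (ginv G x).
Proof.
  symmetry. apply inv_uniq.
  rewrite <- gmulA, mulKr, mulVr. reflexivity.
Qed.

Lemma inv1 {T} (G : group T) : ginv G (gone G) = gone G.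
Proof. symmetry. apply inv_uniq. apply gmul1l. Qed.

Ltac gs := repeat first [ rewrite <- gmulA | rewrite invmul | rewrite invinv
  | rewrite inv1 | rewrite gmulVl | rewrite mulVr | rewrite mulKl
  | rewrite mulKr | rewrite gmul1l | rewrite mul1r ].
Ltac gsr := gs; reflexivity.

Lemma gpow_add {T} (G : group T) x a b :
  gpow G x (a + b) = gmul G (gpow G x a) (gpow G x b).
Proof.
  induction a; simpl. rewrite gmul1l; reflexivity.
  rewrite IHa, gmulA. reflexivity.
Qed.

Lemma gpow_mul {T} (G : group T) x a b :
  gpow G x (b * a) = gpow G (gpow G x a) b.
Proof.
  induction b; simpl. reflexivity.
  rewrite gpow_add, IHb. reflexivity.
Qed.

Lemma gpow_conj {T} (G : group T) h y n :
  gpow G (gmul G h (gmul G y (ginv G h))) n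
  = gmul G h (gmul G (gpow G y n) (ginv G h)).
Proof.
  induction n; simpl.
  - gsr.
  - rewrite IHn. gsr.
Qed.

Lemma subgroup_pow {T} (G : group T) H x n :
  subgroup G H -> H x -> H (gpow G x n).
Proof.
  intros [H1 [Hm Hi]] Hx. induction n; simpl; auto.
Qed.

Lemma pigeon {T} (R : nat -> T -> Prop) n : forall l, length l <= n ->
  (forall i, i <= n -> exists a, In a l /\ R i a) ->
  exists i j a, i < j <= n /\ R i a /\ R j a.
Proof.
  induction n; intros l Hl H.
  - destruct l; [|simpl in Hl; lia].
    destruct (H 0 (le_n _)) as [a [[] _]].
  - destruct (H (S n) (le_n _)) as [a0 [Ha0 R0]].
    destruct (classic (exists i, i <= n /\ R i a0)) as [[i [Hi Ri]]|Hno].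
    + exists i, (S n), a0; repeat split; auto; lia.
    + apply in_split in Ha0; destruct Ha0 as [l1 [l2 ->]].
      destruct (IHn (l1 ++ l2)) as [i [j [a [Hij [Ri Rj]]]]].
      * rewrite length_app in *; simpl in Hl; lia.
      * intros i Hi. destruct (H i ltac:(lia)) as [a [Ha Ra]].
        exists a; split; auto. apply in_app_or in Ha; apply in_or_app.
        destruct Ha as [Ha|Ha]; auto. destruct Ha as [<-|Ha]; auto.
        exfalso; apply Hno; eauto.
      * exists i, j, a; repeat split; auto; lia.
Qed.

Lemma div_fact m k : 1 <= m <= k -> Nat.divide m (fact k).
Proof.
  induction k; intros Hm; [lia|].
  destruct (Nat.eq_dec m (S k)).
  - subst. change (fact (S k)) with (S k * fact k).
    apply Nat.divide_factor_l.
  - change (fact (S k)) with (S k * fact k).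
    apply Nat.divide_mul_r. apply IHk. lia.
Qed.

Definition conjset {T} (G : group T) x (S : T -> Prop) : T -> Prop :=
  fun m => S (gmul G (ginv G x) (gmul G m x)).

Lemma subgroup_conj {T} (G : group T) x S :
  subgroup G S -> subgroup G (conjset G x S).
Proof.
  intros [H1 [Hm Hi]]; unfold conjset; split; [|split].
  - rewrite gmul1l, gmulVl. exact H1.
  - intros a b Ha Hb.
    assert (E : gmul G (gmul G (ginv G x) (gmul G a x)) (gmul G (ginv G x) (gmul G b x))
               = gmul G (ginv G x) (gmul G (gmul G a b) x)) by gsr.
    rewrite <- E. auto.
  - intros a Ha.
    assert (E : ginv G (gmul G (ginv G x) (gmul G a x))
               = gmul G (ginv G x) (gmul G (ginv G a) x)) by gsr.
    rewrite <- E. auto.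
Qed.

Lemma va_conj {T} (G : group T) x S :
  virtually_abelian G S -> virtually_abelian G (conjset G x S).
Proof.
  intros [HS [A [n [HA [HAS [Hab Hidx]]]]]].
  split; [apply subgroup_conj; auto|].
  exists (conjset G x A), n. split; [apply subgroup_conj; auto|].
  split; [intros m Hm; apply HAS; exact Hm|].
  split.
  - intros a b Ha Hb. unfold conjset in *.
    assert (E : gmul G a b = gmul G x (gmul G (gmul G (gmul G (ginv G x) (gmul G a x))
                   (gmul G (ginv G x) (gmul G b x))) (ginv G x))) by gsr.
    assert (E' : gmul G b a = gmul G x (gmul G (gmul G (gmul G (ginv G x) (gmul G b x))
                   (gmul G (ginv G x) (gmul G a x))) (ginv G x))) by gsr.
    rewrite E, E', (Hab _ _ Ha Hb). reflexivity.
  - destruct Hidx as [l [Hl [HlS Hcov]]].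
    exists (map (fun a => gmul G x (gmul G a (ginv G x))) l).
    split; [rewrite length_map; auto|]. split.
    + intros b Hb. apply in_map_iff in Hb. destruct Hb as [a [<- Ha]].
      unfold conjset.
      assert (E : gmul G (ginv G x) (gmul G (gmul G x (gmul G a (ginv G x))) x) = a) by gsr.
      rewrite E. auto.
    + intros h Hh. unfold conjset in Hh. destruct (Hcov _ Hh) as [a [Ha HA']].
      exists (gmul G x (gmul G a (ginv G x))). split.
      * apply in_map_iff. eauto.
      * unfold conjset.
        assert (E : gmul G (ginv G x) (gmul G (gmul G (ginv G (gmul G x (gmul G a (ginv G x)))) h) x)
                    = gmul G (ginv G a) (gmul G (ginv G x) (gmul G h x))) by gsr.
        rewrite E. exact HA'.
Qed.

Lemma va_ext {T} (G : group T) S S' :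
  virtually_abelian G S -> same_set S S' -> virtually_abelian G S'.
Proof.
  intros [[H1 [Hm Hi]] [A [n [HA [HAS [Hab Hidx]]]]]] E.
  split; [split; [|split]|].
  - apply E; auto.
  - intros a b Ha Hb. apply E. apply Hm; apply E; auto.
  - intros a Ha. apply E. apply Hi; apply E; auto.
  - exists A, n. split; auto. split; [intros m Hm'; apply E; auto|].
    split; auto. destruct Hidx as [l [Hl [HlS Hcov]]].
    exists l. split; auto. split.
    + intros a Ha. apply E; auto.
    + intros h Hh. apply Hcov. apply E; auto.
Qed.

Lemma max_conj {T} (G : group T) x z M :
  max_va_containing G z M ->
  max_va_containing G (gmul G x (gmul G z (ginv G x))) (conjset G x M).
Proof.
  intros [Hva [Hz Hmax]]. split; [apply va_conj; auto|]. split.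
  - unfold conjset.
    assert (E : gmul G (ginv G x) (gmul G (gmul G x (gmul G z (ginv G x))) x) = z) by gsr.
    rewrite E; auto.
  - intros N HN Hsub.
    assert (HN' : virtually_abelian G (conjset G (ginv G x) N)) by (apply va_conj; auto).
    assert (Hs : same_set (conjset G (ginv G x) N) M).
    { apply Hmax; auto. intros m Hm. unfold conjset. rewrite invinv.
      apply Hsub. unfold conjset.
      assert (E : gmul G (ginv G x) (gmul G (gmul G x (gmul G m (ginv G x))) x) = m) by gsr.
      rewrite E; auto. }
    intro m. specialize (Hs (gmul G (ginv G x) (gmul G m x))).
    unfold conjset in *. rewrite invinv in Hs.
    assert (E : gmul G x (gmul G (gmul G (ginv G x) (gmul G m x)) (ginv G x)) = m) by gsr.
    rewrite E in Hs. exact Hs.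
Qed.

Lemma normal_from_same {T} (G : group T) x M :
  self_normalizing G M -> same_set (conjset G x M) M -> M x.
Proof.
  intros Hs He. apply Hs. intro m. specialize (He (gmul G x (gmul G m (ginv G x)))).
  unfold conjset in He.
  assert (E : gmul G (ginv G x) (gmul G (gmul G x (gmul G m (ginv G x))) x) = m) by gsr.
  rewrite E in He. tauto.
Qed.

Lemma max_pow {T} (G : group T) g M n :
  max_va_containing G g M -> max_va_containing G (gpow G g n) M.
Proof.
  intros [Hva [Hg Hmax]]. split; auto. split; auto.
  apply subgroup_pow; auto. apply Hva.
Qed.

Lemma key {T} (G : group T) K y M x : K_CSA G K -> infinite_order G y ->
  max_va_containing G y M -> gmul G x y = gmul G y x -> M x.
Proof.
  intros [_ HC] Hy HM E.
  destruct (HC y Hy) as [_ [U P]].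
  apply (normal_from_same G); [apply (P M HM)|].
  apply (U _ _); auto.
  assert (Ey : y = gmul G x (gmul G y (ginv G x))).
  { rewrite gmulA, E. gsr. }
  rewrite Ey at 1. apply max_conj; auto.
Qed.

Fixpoint tpow (t : gterm) (n : nat) : gterm :=
  match n with 0 => TOne | S n => TMul t (tpow t n) end.

Lemma eval_tpow {T} (G : group T) x y t n :
  eval_term G x y (tpow t n) = gpow G (eval_term G x y t) n.
Proof. induction n; simpl; congruence. Qed.

Lemma pow_in_A {T} (G : group T) M A n K u :
  subgroup G M -> subgroup G A -> n < K -> index_le G M A n -> M u ->
  A (gpow G u (fact K)).
Proof.
  intros HM HA HnK [l [Hl [HlM Hcov]]] Hu.
  destruct (pigeon (fun i a => A (gmul G (ginv G a) (gpow G u i))) n l Hl)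
    as [i [j [a [Hij [Ri Rj]]]]].
  { intros i Hi. apply Hcov. apply subgroup_pow; auto. }
  set (m := j - i).
  assert (Hj : j = i + m) by (unfold m; lia).
  rewrite Hj, gpow_add in Rj.
  assert (Am : A (gpow G u m)).
  { assert (E : gmul G (ginv G (gmul G (ginv G a) (gpow G u i)))
                  (gmul G (ginv G a) (gmul G (gpow G u i) (gpow G u m))) = gpow G u m) by gsr.
    rewrite <- E. destruct HA as [_ [Hm Hi']]. auto. }
  destruct (div_fact m K ltac:(unfold m; lia)) as [q Hq].
  rewrite Hq, gpow_mul. apply subgroup_pow; auto.
Qed.

Theorem proposition2p5 (K : nat) (hK : 0 < K) :
  exists psi : qf_formula,
    forall (T : Type) (G : group T), K_CSA G K ->
      forall g : T, infinite_order G g ->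
        forall M : T -> Prop, max_va_containing G g M ->
          forall h : T, M h <-> sat G h g psi.
Proof.
  set (yN := tpow TY (fact K)).
  set (c := TMul TX (TMul yN (TInv TX))).
  exists (FEq (TMul c yN) (TMul yN c)).
  intros T G HK g Hg M HM h.
  cbn [sat]. unfold c, yN. cbn [eval_term]. rewrite !eval_tpow. cbn [eval_term].
  set (y := gpow G g (fact K)).
  assert (Hy : infinite_order G y).
  { intros n Hn E. unfold y in E. rewrite <- gpow_mul in E.
    apply (Hg (n * fact K)); auto. pose proof (lt_O_fact K). nia. }
  assert (HMy : max_va_containing G y M) by (apply max_pow; auto).
  pose proof HK as [_ HC].
  destruct (HC g Hg) as [_ [_ Pg]].
  destruct (Pg M HM) as [[A [n [HA [HAM [Hab [_ [HnK Hidx]]]]]]] _].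
  destruct HM as [Hva [HgM Hmax]].
  split.
  - intros Hh.
    apply Hab.
    + unfold y; rewrite <- gpow_conj.
      apply (pow_in_A G M A n K); [apply Hva | exact HA | exact HnK | exact Hidx |].
      destruct Hva as [[_ [Hm Hi]] _]. auto.
    + apply (pow_in_A G M A n K); [apply Hva | exact HA | exact HnK | exact Hidx | exact HgM].
  - intros E.
    set (x := gmul G h (gmul G y (ginv G h))) in *.
    assert (Hx : M x) by (eapply key; eauto).
    assert (Hxi : infinite_order G x).
    { intros k Hk E'. apply (Hy k Hk). unfold x in E'. rewrite gpow_conj in E'.
      assert (E2 : gpow G y k = gmul G (ginv G h) (gmul G (gmul G h (gmul G (gpow G y k) (ginv G h))) h)) by gsr.
      rewrite E2, E'. gsr. }
    destruct (HC x Hxi) as [_ [Ux Px]].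
    assert (HMx : max_va_containing G x M) by (split; auto).
    apply (normal_from_same G); [apply (Px M HMx)|].
    apply (Ux _ _); auto. apply max_conj; auto.
Qed.
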